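(* Let $G$ be the general event structure with events $\{a,b,c,d,e\}$, in which a finite set is consistent iff it does not contain both $a$ and $b$, and whose enabling relation is the least one (closed under consistent supersets of the left-hand side) with $\emptyset\vdash a$, $\emptyset\vdash b$, $\emptyset\vdash c$, $\emptyset\vdash d$, $\{b,c\}\vdash e$ and $\{d\}\vdash e$. Let $\mathcal H=\{x\setminus\{b\}\mid x\text{ a configuration of }G\}$. Then there is no general event structure with event set $\{a,c,d,e\}$ whose set of configurations is exactly $\mathcal H$.
   Context: A general event structure is $(E,\mathrm{Con},\vdash)$ with $\mathrm{Con}$ a nonempty subset-closed family of finite subsets of $E$ and $\vdash\subseteq\mathrm{Con}\times E$ such that $Y\in\mathrm{Con}$, $X\subseteq Y$, $X\vdash e$ imply $Y\vdash e$. A configuration is a subset $x\subseteq E$ that is consistent (all finite subsets in $\mathrm{Con}$) and secured (for each $e\in x$ there are $e_1,\dots,e_n\in x$ with $e_n=e$ and $\{e_1,\dots,e_{i-1}\}\vdash e_i$ for every $i\le n$). *)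

(* Defs.v *)
From HB Require Import structures.
From mathcomp Require Import all_boot.
Set Implicit Arguments. Unset Strict Implicit. Unset Printing Implicit Defensive.

Definition is_ges (E : finType) (con : {set E} -> Prop)
  (enab : {set E} -> E -> Prop) : Prop :=
  [/\ (exists X, con X),
      (forall X Y : {set E}, con Y -> X \subset Y -> con X),
      (forall X e, enab X e -> con X) &
      (forall (X Y : {set E}) e, con Y -> X \subset Y -> enab X e -> enab Y e)].

Definition consistent (E : finType) (con : {set E} -> Prop) (x : {set E}) :=
  forall y : {set E}, y \subset x -> con y.

(* x is secured: every e in x has a securing chain e_1,...,e_n = e in x with
   {e_1,...,e_(i-1)} |- e_i. The chain is written  rcons s e. *)
Definition secured (E : finType) (enab : {set E} -> E -> Prop) (x : {set E}) :=
  forall e, e \in x -> exists s : seq E,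
    all (fun y => y \in x) (rcons s e) /\
    forall i, i < size (rcons s e) ->
      enab [set y | y \in take i (rcons s e)] (nth e (rcons s e) i).

Definition configuration (E : finType) (con : {set E} -> Prop)
  (enab : {set E} -> E -> Prop) (x : {set E}) :=
  consistent con x /\ secured enab x.

Inductive ev5 := ea | eb | ec | ed | ee.

Definition ev5_to (x : ev5) : 'I_5 :=
  match x with ea => inord 0 | eb => inord 1 | ec => inord 2
             | ed => inord 3 | ee => inord 4 end.
Definition ev5_of (i : 'I_5) : ev5 :=
  match val i with 0 => ea | 1 => eb | 2 => ec | 3 => ed | _ => ee end.
Lemma ev5_toK : cancel ev5_to ev5_of.
Proof. by case; rewrite /ev5_of /= inordK. Qed.
HB.instance Definition _ := Finite.copy ev5 (can_type ev5_toK).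

Definition G_con (X : {set ev5}) : Prop := ~ ((ea \in X) /\ (eb \in X)).

Definition G_gen (Y : {set ev5}) (x : ev5) : Prop :=
  (Y = set0 /\ x = ea) \/ (Y = set0 /\ x = eb) \/ (Y = set0 /\ x = ec) \/
  (Y = set0 /\ x = ed) \/ (Y = [set eb; ec] /\ x = ee) \/ (Y = [set ed] /\ x = ee).

(* least enabling relation containing the generators and closed under
   consistent supersets of the left-hand side *)
Definition G_enab (X : {set ev5}) (x : ev5) : Prop :=
  G_con X /\ exists Y : {set ev5}, Y \subset X /\ G_gen Y x.

Inductive ev4 := fa | fc | fd | fe.

Definition ev4_to (x : ev4) : 'I_4 :=
  match x with fa => inord 0 | fc => inord 1 | fd => inord 2 | fe => inord 3 end.
Definition ev4_of (i : 'I_4) : ev4 :=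
  match val i with 0 => fa | 1 => fc | 2 => fd | _ => fe end.
Lemma ev4_toK : cancel ev4_to ev4_of.
Proof. by case; rewrite /ev4_of /= inordK. Qed.
HB.instance Definition _ := Finite.copy ev4 (can_type ev4_toK).

Definition ev4_in (x : ev4) : ev5 :=
  match x with fa => ea | fc => ec | fd => ed | fe => ee end.

Definition inH (y : {set ev5}) : Prop :=
  exists x : {set ev5}, configuration G_con G_enab x /\ y = x :\ eb.

(* Main.v *)
Require Import Defs.
From HB Require Import structures.
From mathcomp Require Import all_boot.
Definition beq5 (x y : ev5) := match x, y with
 | ea, ea | eb, eb | ec, ec | ed, ed | ee, ee => true | _, _ => false end.
Lemma eq5E (x y : ev5) : (x == y) = beq5 x y.
Proof. by case: x; case: y => //=; first [exact: eqxx | apply/eqP; discriminate]. Qed.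
Definition beq4 (x y : ev4) := match x, y with
 | fa, fa | fc, fc | fd, fd | fe, fe => true | _, _ => false end.
Lemma eq4E (x y : ev4) : (x == y) = beq4 x y.
Proof. by case: x; case: y => //=; first [exact: eqxx | apply/eqP; discriminate]. Qed.
Lemma ev4_in_inj : injective ev4_in. Proof. by case; case. Qed.
Lemma memI (A : {set ev4}) x : (ev4_in x \in ev4_in @: A) = (x \in A).
Proof. exact: mem_imset ev4_in_inj. Qed.
Lemma memIb (A : {set ev4}) : (eb \in ev4_in @: A) = false.
Proof. by apply/imsetP => -[[]]. Qed.
Ltac img := apply/setP; case; rewrite ?memIb -?[ea]/(ev4_in fa) -?[ec]/(ev4_in fc) -?[ed]/(ev4_in fd) -?[ee]/(ev4_in fe) ?memI !inE ?eq4E ?eq5E //.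

Lemma enab_of (X Y : {set ev5}) x : G_con X -> Y \subset X -> G_gen Y x -> G_enab X x.
Proof. by move=> h1 h2 h3; split=> //; exists Y. Qed.

Ltac gg := rewrite /G_gen; repeat (first [left; split; reflexivity | right]); split; reflexivity.
Ltac gcon := rewrite /G_con !inE ?eq5E /=; case=> //.
Ltac gsub := apply/subsetP; case; rewrite !inE ?eq5E //=.
Ltac step Y := apply: (@enab_of _ Y); [gcon | gsub | gg].

Lemma consis (x : {set ev5}) : ~~ ((ea \in x) && (eb \in x)) -> consistent G_con x.
Proof.
move=> h y /subsetP hs [Ha Hb]; move/negP: h; apply; by rewrite (hs _ Ha) (hs _ Hb).
Qed.

Lemma cfg_full : configuration G_con G_enab [set ea; ec; ed; ee].
Proof.
split; first by apply: consis; rewrite !inE ?eq5E.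
move=> e; case: e; rewrite !inE ?eq5E // => _.
- exists [::]; split; first by rewrite /= !inE ?eq5E.
  by move=> [|i] //= _; step (set0 : {set ev5}).
- exists [::]; split; first by rewrite /= !inE ?eq5E.
  by move=> [|i] //= _; step (set0 : {set ev5}).
- exists [::]; split; first by rewrite /= !inE ?eq5E.
  by move=> [|i] //= _; step (set0 : {set ev5}).
- exists [:: ed]; split; first by rewrite /= !inE ?eq5E.
  move=> [|[|i]] //= _; first by step (set0 : {set ev5}).
  by step [set ed].
Qed.

Lemma cfg_bce : configuration G_con G_enab [set eb; ec; ee].
Proof.
split; first by apply: consis; rewrite !inE ?eq5E.
move=> e; case: e; rewrite !inE ?eq5E // => _.
- exists [::]; split; first by rewrite /= !inE ?eq5E.
  by move=> [|i] //= _; step (set0 : {set ev5}).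
- exists [::]; split; first by rewrite /= !inE ?eq5E.
  by move=> [|i] //= _; step (set0 : {set ev5}).
- exists [:: eb; ec]; split; first by rewrite /= !inE ?eq5E.
  move=> [|[|[|i]]] //= _; try by step (set0 : {set ev5}).
  by step [set eb; ec].
Qed.

Lemma cfg_a : configuration G_con G_enab [set ea].
Proof.
split; first by apply: consis; rewrite !inE ?eq5E.
move=> e; case: e; rewrite !inE ?eq5E // => _.
exists [::]; split; first by rewrite /= !inE ?eq5E.
by move=> [|i] //= _; step (set0 : {set ev5}).
Qed.

Lemma not_inH : ~ inH [set ea; ec; ee].
Proof.
move=> [x [[Hcon Hsec] Hx]].
have mx : forall y : ev5, y != eb -> (y \in x) = (y \in [set ea; ec; ee]).
  by move=> y hy; rewrite Hx in_setD1 hy.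
have ax : ea \in x by rewrite mx; [rewrite !inE ?eq5E | rewrite eq5E].
have ex : ee \in x by rewrite mx; [rewrite !inE ?eq5E | rewrite eq5E].
have dx : ed \notin x by rewrite mx; [rewrite !inE ?eq5E | rewrite eq5E].
have bx : eb \notin x.
  apply/negP => hb; apply: (Hcon [set ea; eb]); last by rewrite !inE ?eq5E.
  by apply/subsetP => y; rewrite !inE => /orP[] /eqP ->.
have [s [Hall Hen]] := Hsec ee ex.
have := Hen (size s); rewrite size_rcons ltnSn nth_rcons ltnn eqxx => /(_ isT).
move=> [_ [Y [hY hg]]].
have hYx : forall y, y \in Y -> y \in x.
  move=> y /(subsetP hY); rewrite inE => /mem_take hy; exact: (allP Hall).
case: hg => [[_ //]|[[_ //]|[[_ //]|[[_ //]|[[hy _]|[hy _]]]]]].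
- by move: bx; rewrite hYx // hy !inE ?eq5E.
- by move: dx; rewrite hYx // hy !inE ?eq5E.
Qed.

Lemma sec_mono (E : finType) (enab : {set E} -> E -> Prop) (A B : {set E}) e :
  secured enab A -> A \subset B -> e \in A -> exists s : seq E,
    all (fun y => y \in B) (rcons s e) /\
    forall i, i < size (rcons s e) ->
      enab [set y | y \in take i (rcons s e)] (nth e (rcons s e) i).
Proof.
move=> hs /subsetP hAB he; have [s [ha hn]] := hs e he.
by exists s; split=> //; apply: sub_all ha => y /hAB.
Qed.

Arguments sec_mono {E enab A B e}.

Theorem mainTheorem10 :
  ~ exists (con : {set ev4} -> Prop) (enab : {set ev4} -> ev4 -> Prop),
      is_ges con enab /\
      forall x : {set ev4},
        configuration con enab x <-> inH (ev4_in @: x).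
Proof.
move=> [con [enab [Hges H]]].
have c1 : configuration con enab [set fa; fc; fd; fe].
  by apply/H; exists [set ea; ec; ed; ee]; split; [exact: cfg_full | img].
have c2 : configuration con enab [set fc; fe].
  by apply/H; exists [set eb; ec; ee]; split; [exact: cfg_bce | img].
have c3 : configuration con enab [set fa].
  by apply/H; exists [set ea]; split; [exact: cfg_a | img].
have c4 : configuration con enab [set fa; fc; fe].
  split.
    move=> y hy; apply: c1.1; apply: subset_trans hy _.
    by apply/subsetP; case; rewrite !inE ?eq4E.
  move=> e he; case: e he => he.
  - apply: (sec_mono c3.2); last by rewrite !inE.
    by apply/subsetP; case; rewrite !inE ?eq4E.
  - apply: (sec_mono c2.2); last by rewrite !inE ?eq4E.
    by apply/subsetP; case; rewrite !inE ?eq4E.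
  - by move: he; rewrite !inE ?eq4E.
  - apply: (sec_mono c2.2); last by rewrite !inE ?eq4E.
    by apply/subsetP; case; rewrite !inE ?eq4E.
apply: not_inH.
have -> : [set ea; ec; ee] = ev4_in @: [set fa; fc; fe] by img.
exact/H.
Qed.
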